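(* Let $\pi$ be a $k$-permutation and $\alpha,\beta\in(0,1)$. Then $$\lim_{n\to\infty} n^3\,\frac{\partial}{\partial x_{\lfloor\alpha n\rfloor,\lfloor\beta n\rfloor}}h_{\pi,n}(0,\dots,0)=\lim_{n\to\infty}\frac{k!}{n^{2k-4}}\sum_{\substack{f,g:[k]\to[n]\\ \text{strictly increasing}}}\ \sum_{m\in[k]}B^{\lfloor\alpha n\rfloor,\lfloor\beta n\rfloor}_{f(m),\,g(\pi(m))}$$ whenever either of the two limits exists (in which case both exist).
   Context: A $k$-permutation is a bijection of $[k]=\{1,\dots,k\}$. Fix $n\ge2$. For $k',l\in[n-1]$ let $B^{k',l}\in\mathbb{R}^{n\times n}$ have entries $+1$ at $(k',l)$ and $(k'+1,l+1)$, $-1$ at $(k'+1,l)$ and $(k',l+1)$, and $0$ elsewhere. Let $J$ be the $n\times n$ matrix with all entries $1/n$, and for $x=(x_{i,j})_{i,j\in[n-1]}$ let $J^x=J+\sum_{i,j\in[n-1]}x_{i,j}B^{i,j}$. For a $k$-permutation $\pi$, $h_{\pi,n}(x)$ is the density of $\pi$ in the step permuton of $J^x$, which is the polynomial $h_{\pi,n}(x)=\frac{k!}{n^k}\sum_{f,g}\frac{1}{\prod_{i\in[n]}|f^{-1}(i)|!\,|g^{-1}(i)|!}\prod_{m\in[k]}(J^x)_{f(m),g(\pi(m))}$, the sum over all non-decreasing functions $f,g:[k]\to[n]$. The sequences in $n$ are considered for $n$ large enough that $\lfloor\alpha n\rfloor,\lfloor\beta n\rfloor\in[n-1]$. *)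

(* Defs.v *)
From HB Require Import structures.
From mathcomp Require Import all_boot all_order all_algebra.
From mathcomp Require Import all_classical all_reals all_analysis.
From mathcomp Require Import fingroup perm.
Set Implicit Arguments. Unset Strict Implicit. Unset Printing Implicit Defensive.
Import Order.TTheory GRing.Theory Num.Theory.
Local Open Scope ring_scope.

(* Indices: rows/columns of n x n matrices are 'I_n (0-based); the paper's
   1-based index i corresponds to ordinal with value i-1.  Matrix B and the
   variables x are indexed by 1-based natural numbers, as in the paper. *)

Definition Bmx (R : pzRingType) (n k' l : nat) : 'M[R]_n :=
  \matrix_(i < n, j < n)
    (if ((i.+1 == k') && (j.+1 == l)) || ((i.+1 == k'.+1) && (j.+1 == l.+1))
     then 1
     else if ((i.+1 == k'.+1) && (j.+1 == l)) || ((i.+1 == k') && (j.+1 == l.+1))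
     then -1 else 0).

Definition Jmx (R : fieldType) (n : nat) : 'M[R]_n := const_mx (n%:R)^-1.

Definition Jx (R : fieldType) (n : nat) (x : nat -> nat -> R) : 'M[R]_n :=
  Jmx R n + \sum_(1 <= i < n) \sum_(1 <= j < n) x i j *: Bmx R n i j.

Definition fT (k n : nat) := {ffun 'I_k -> 'I_n}.

Definition nondecr (k n : nat) (f : {ffun 'I_k -> 'I_n}) : bool :=
  [forall i : 'I_k, forall j : 'I_k, (i <= j)%N ==> (f i <= f j)%N].

Definition strincr (k n : nat) (f : {ffun 'I_k -> 'I_n}) : bool :=
  [forall i : 'I_k, forall j : 'I_k, (i < j)%N ==> (f i < f j)%N].

Definition fib (k n : nat) (f : {ffun 'I_k -> 'I_n}) (i : 'I_n) : nat :=
  #|[set m : 'I_k | f m == i]|.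

(* h_{pi,n}(x): density of pi in the step permuton of J^x *)
Definition h (R : fieldType) (k : nat) (pi : 'S_k) (n : nat)
    (x : nat -> nat -> R) : R :=
  (k`!)%:R / (n%:R) ^+ k *
  \sum_(f : fT k n | nondecr f)
   \sum_(g : fT k n | nondecr g)
     ((\prod_(i < n) ((fib f i)`! * (fib g i)`!)%N)%:R)^-1 *
     \prod_(m < k) Jx n x (f m) (g (pi m)).

Definition ecoord (R : pzRingType) (a b : nat) (t : R) : nat -> nat -> R :=
  fun i j => if (i == a) && (j == b) then t else 0.

Definition dh (R : realType) (k : nat) (pi : 'S_k) (n a b : nat) : R :=
  derive1 (fun t : R => h pi n (ecoord a b t)) 0.

Definition fl (R : realType) (alpha : R) (n : nat) : nat := Num.truncn (alpha * n%:R).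

Definition lhs_seq (R : realType) (k : nat) (pi : 'S_k) (alpha beta : R)
    (n : nat) : R :=
  (n%:R) ^+ 3 * @dh R k pi n (fl alpha n) (fl beta n).

Definition rhs_seq (R : realType) (k : nat) (pi : 'S_k) (alpha beta : R)
    (n : nat) : R :=
  (k`!)%:R / (n%:R : R) ^ (2 * (k : int) - 4) *
  \sum_(f : fT k n | strincr f)
   \sum_(g : fT k n | strincr g)
    \sum_(m < k) Bmx R n (fl alpha n) (fl beta n) (f m) (g (pi m)).

(* Main.v *)
Require Import Defs.
From HB Require Import structures.
From mathcomp Require Import all_boot all_order all_algebra.
From mathcomp Require Import all_classical all_reals all_analysis.
From mathcomp Require Import fingroup perm.
From mathcomp Require Import zify ring lra.
Import Order.TTheory GRing.Theory Num.Theory.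
Import numFieldNormedType.Exports.
Set Implicit Arguments. Unset Strict Implicit. Unset Printing Implicit Defensive.
Local Open Scope nat_scope.

Definition imf k n (f : fT k n) : {set 'I_n} := [set f p | p in 'I_k].
Definition rk n (S : {set 'I_n}) (z : 'I_n) : nat := #|[set w in S | w < z]|.
Definition shp k n (f : fT k n) : {ffun 'I_k -> 'I_k.+1} :=
  [ffun p => inord (rk (imf f) (f p))].

Lemma imfP k n (f : fT k n) p : f p \in imf f.
Proof. by apply: imset_f. Qed.

Lemma imf_card k n (f : fT k n) : #|imf f| <= k.
Proof. by rewrite /imf (leq_trans (leq_imset_card _ _)) // card_ord. Qed.

Lemma rk_le n (S : {set 'I_n}) z : rk S z <= #|S|.
Proof. by apply: subset_leq_card; apply/fintype.subsetP => w; rewrite inE => /andP[]. Qed.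

Lemma rk_lt n (S : {set 'I_n}) (x y : 'I_n) : x \in S -> x < y -> rk S x < rk S y.
Proof.
move=> xS xy; apply: proper_card.
apply/fintype.properP; split.
  apply/fintype.subsetP => w. rewrite !inE. case/andP => -> wx /=. 
  exact: ltn_trans wx xy.
exists x. by rewrite !inE xS xy. by rewrite !inE ltnn andbF.
Qed.

Lemma rk_inj n (S : {set 'I_n}) (x y : 'I_n) : x \in S -> y \in S -> rk S x = rk S y -> x = y.
Proof.
move=> xS yS e; apply/val_inj => /=.
case: (ltngtP x y) => // h.
  by have := rk_lt xS h; rewrite e ltnn.
by have := rk_lt yS h; rewrite e ltnn.
Qed.

Lemma shp_inj k n (f g : fT k n) : imf f = imf g -> shp f = shp g -> f = g.
Proof.
move=> ei es; apply/ffunP => p.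
have := congr1 (fun F : {ffun 'I_k -> 'I_k.+1} => val (F p)) es; rewrite !ffunE /=.
rewrite !inordK; last 2 first.
- by rewrite ltnS (leq_trans (rk_le _ _)) // imf_card.
- by rewrite ltnS (leq_trans (rk_le _ _)) // imf_card.
rewrite ei => e; apply: rk_inj e; last exact: imfP.
by rewrite -ei; exact: imfP.
Qed.

Lemma bin_le_exp n i : 'C(n, i) <= n ^ i.
Proof.
apply: (@leq_trans (n ^_ i)).
  by rewrite -bin_ffact leq_pmulr // fact_gt0.
elim: i => [|i IH] //; by rewrite ffactnSr expnSr leq_mul // leq_subr.
Qed.

Lemma cnt_sets n j : 0 < n -> #|[set S : {set 'I_n} | #|S| <= j]| <= j.+1 * n ^ j.
Proof.
move=> n0; elim: j => [|j IH].
  rewrite mul1n expn0; apply/card_le1_eqP => S T; rewrite !inE !leqn0 !cards_eq0.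
  by move=> /eqP -> /eqP ->.
have -> : [set S : {set 'I_n} | #|S| <= j.+1] =
          [set S : {set 'I_n} | #|S| <= j] :|: [set S : {set 'I_n} | #|S| == j.+1].
  by apply/setP => S; rewrite !inE leq_eqVlt ltnS orbC.
rewrite (leq_trans (leq_card_setU _ _)) // card_draws card_ord.
rewrite (leq_trans (leq_add IH (bin_le_exp n j.+1))) // expnS.
move: (n ^ j) => N; nia.
Qed.

Lemma cnt_main k n (x y : 'I_n) r : 0 < n -> x != y ->
  #|[set f : fT k n | [&& x \in imf f, y \in imf f & #|imf f| <= r]]| * n ^ 2
    <= k.+1 ^ k * r.+1 * n ^ r.
Proof.
move=> n0 xy.
case: r => [|[|r]]; set A := [set f : fT k n | _].
- suff -> : A = finset.set0 by rewrite cards0.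
  apply/setP => f; rewrite !inE; apply/negP => /and3P[xi yi c].
  by move: c; rewrite leqn0 cards_eq0 => /eqP e; move: xi; rewrite e inE.
- suff -> : A = finset.set0 by rewrite cards0.
  apply/setP => f; rewrite !inE; apply/negP => /and3P[xi yi c].
  have : #|[set x; y]| <= #|imf f|.
    by apply: subset_leq_card; apply/fintype.subsetP => z; rewrite !inE => /orP[]/eqP->.
  by rewrite cards2 xy => /leq_trans /(_ c).
set phi := fun f : fT k n => (imf f :\ x :\ y, shp f).
set B := finset.setX [set S : {set 'I_n} | #|S| <= r] [set: {ffun 'I_k -> 'I_k.+1}].
have injA : {in A &, injective phi}.
  move=> f g; rewrite !inE => /and3P[xf yf _] /and3P[xg yg _] [e1 e2].
  apply: shp_inj e2.
  have yf' : y \in imf f :\ x.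
    by rewrite !inE yf andbT; apply/eqP => e; move: xy; rewrite e eqxx.
  have yg' : y \in imf g :\ x.
    by rewrite !inE yg andbT; apply/eqP => e; move: xy; rewrite e eqxx.
  by rewrite -(finset.setD1K xf) -(finset.setD1K yf') e1 (finset.setD1K yg') (finset.setD1K xg).
have sub : phi @: A \subset B.
  apply/fintype.subsetP => z /imsetP[f fA ->]; move: fA; rewrite inE => /and3P[xf yf c].
  rewrite !inE andbT.
  have yf' : y \in imf f :\ x.
    by rewrite !inE yf andbT; apply/eqP => e; move: xy; rewrite e eqxx.
  move: c; rewrite (cardsD1 x) xf (cardsD1 y (imf f :\ x)) yf' /=.
  by rewrite !add1n !ltnS.
have := subset_leq_card sub; rewrite (card_in_imset injA) cardsX cardsT card_ffun !card_ord.
move=> h; have c := cnt_sets r n0.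
have -> : n ^ r.+2 = n ^ r * n ^ 2 by rewrite -expnD addn2.
rewrite mulnA leq_mul2r; apply/orP; right.
apply: (leq_trans h); rewrite mulnC -mulnA leq_mul2l; apply/orP; right.
apply: (leq_trans c); rewrite leq_mul2r ltnS; apply/orP; right; exact: leqW.
Qed.

Local Open Scope ring_scope.

Definition sw k n (x y : 'I_n) (f : fT k n) : fT k n :=
  [ffun p => if f p == x then y else f p].

Lemma sw_im k n (x y : 'I_n) (f : fT k n) : x != y -> x \notin imf (sw x y f).
Proof.
move=> xy; apply/imsetP => -[p _]; rewrite ffunE.
case: eqP => [_ e|ne e]; first by move: xy; rewrite e eqxx.
by apply: ne.
Qed.

Lemma sw_K k n (x y : 'I_n) (f : fT k n) : y \notin imf f -> sw y x (sw x y f) = f.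
Proof.
move=> yn; apply/ffunP => p; rewrite !ffunE.
have fy : f p != y by apply/eqP => e; move: yn; rewrite -e imfP.
case: (eqVneq (f p) x) => [e|ne] /=; first by rewrite eqxx e.
by rewrite (negbTE fy).
Qed.

Lemma swap_sum (R : zmodType) k n (P : pred (fT k n)) (w : fT k n -> R) (m : 'I_k) (x y : 'I_n) :
  x != y ->
  (forall f, P f -> y \notin imf f -> P (sw x y f)) ->
  (forall f, P f -> x \notin imf f -> P (sw y x f)) ->
  (forall f, y \notin imf f -> w (sw x y f) = w f) ->
  \sum_(f | P f && (f m == x)) w f - \sum_(f | P f && (f m == y)) w f =
  \sum_(f | [&& P f, f m == x & y \in imf f]) w f
   - \sum_(f | [&& P f, f m == y & x \in imf f]) w f.
Proof.
move=> xy c1 c2 ew.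
have yx : y != x by apply/eqP => e; move: xy; rewrite e eqxx.
rewrite (bigID (fun f => y \in imf f) (fun f => P f && (f m == x))) /=.
rewrite [X in _ - X](bigID (fun f => x \in imf f) (fun f => P f && (f m == y))) /=.
have E : \sum_(f | P f && (f m == x) && (y \notin imf f)) w f =
         \sum_(f | P f && (f m == y) && (x \notin imf f)) w f.
  rewrite [RHS](reindex_onto (sw x y) (sw y x)); last first.
    by move=> g /andP[_ xn]; apply: sw_K.
  apply: eq_big => f; last by move=> /andP[_ yn]; rewrite ew.
  apply/idP/idP.
    case/andP => /andP[Pf fmx] yn.
    rewrite c1 // ffunE fmx /= eqxx /= sw_im //=.
    by rewrite sw_K.
  case/andP => /andP[/andP[Psw swm] xn] /eqP e.
  rewrite -e c2 //= ffunE (eqP swm) eqxx eqxx /=.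
  exact: sw_im.
rewrite E.
have e1 : \sum_(f | P f && (f m == x) && (y \in imf f)) w f =
          \sum_(f | [&& P f, f m == x & y \in imf f]) w f.
  by apply: eq_bigl => f; rewrite andbA.
have e2 : \sum_(f | P f && (f m == y) && (x \in imf f)) w f =
          \sum_(f | [&& P f, f m == y & x \in imf f]) w f.
  by apply: eq_bigl => f; rewrite andbA.
rewrite e1 e2.
by rewrite opprD addrACA subrr addr0.
Qed.

Lemma ordneq n (u v : 'I_n) : u != v -> (u : nat) != v.
Proof. by []. Qed.

Lemma ordeq n (u v : 'I_n) : u == v -> (u : nat) = v.
Proof. by move/eqP => ->. Qed.

Lemma nimf k n (f : fT k n) (y : 'I_n) p : y \notin imf f -> (f p : nat) != y.
Proof. by move=> yn; apply/eqP => /val_inj e; move: yn; rewrite -e imfP. Qed.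

Ltac ordcase u v := case: (eqVneq u v) => [/eqP/ordeq ? | /ordneq ?].

Lemma nd_sw1 k n (x y : 'I_n) (f : fT k n) : (y : nat) = x.+1 -> nondecr f ->
  y \notin imf f -> nondecr (sw x y f).
Proof.
move=> exy /forallP nd yn; apply/forallP => i; apply/forallP => j; apply/implyP => ij.
have := implyP (forallP (nd i) j) ij; rewrite !ffunE.
have := nimf i yn; have := nimf j yn.
by ordcase (f i) x; ordcase (f j) x; move=> /= *; lia.
Qed.

Lemma nd_sw2 k n (x y : 'I_n) (f : fT k n) : (y : nat) = x.+1 -> nondecr f ->
  x \notin imf f -> nondecr (sw y x f).
Proof.
move=> exy /forallP nd yn; apply/forallP => i; apply/forallP => j; apply/implyP => ij.
have := implyP (forallP (nd i) j) ij; rewrite !ffunE.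
have := nimf i yn; have := nimf j yn.
by ordcase (f i) y; ordcase (f j) y; move=> /= *; lia.
Qed.

Lemma st_sw1 k n (x y : 'I_n) (f : fT k n) : (y : nat) = x.+1 -> strincr f ->
  y \notin imf f -> strincr (sw x y f).
Proof.
move=> exy /forallP nd yn; apply/forallP => i; apply/forallP => j; apply/implyP => ij.
have := implyP (forallP (nd i) j) ij; rewrite !ffunE.
have := nimf i yn; have := nimf j yn.
by ordcase (f i) x; ordcase (f j) x; move=> /= *; lia.
Qed.

Lemma st_sw2 k n (x y : 'I_n) (f : fT k n) : (y : nat) = x.+1 -> strincr f ->
  x \notin imf f -> strincr (sw y x f).
Proof.
move=> exy /forallP nd yn; apply/forallP => i; apply/forallP => j; apply/implyP => ij.
have := implyP (forallP (nd i) j) ij; rewrite !ffunE.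
have := nimf i yn; have := nimf j yn.
by ordcase (f i) y; ordcase (f j) y; move=> /= *; lia.
Qed.

Lemma st_nd k n (f : fT k n) : strincr f -> nondecr f.
Proof.
move=> /forallP st; apply/forallP => i; apply/forallP => j; apply/implyP => ij.
case: (ltngtP i j) => h.
- exact: ltnW (implyP (forallP (st i) j) h).
- by move: ij; rewrite leqNgt h.
- by have -> : i = j by apply: val_inj.
Qed.

Lemma nd_nst_card k n (f : fT k n) : nondecr f -> ~~ strincr f -> (#|imf f| <= k.-1)%N.
Proof.
move=> /forallP nd nst.
have : (#|imf f| <= k)%N by apply: imf_card.
rewrite leq_eqVlt => /orP[/eqP e|]; last by move=> h; lia.
exfalso; move: nst => /negP; apply; apply/forallP => i; apply/forallP => j.
apply/implyP => ij.
have inj : {in 'I_k &, injective f}.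
  by apply/imset_injP; rewrite e card_ord.
have := implyP (forallP (nd i) j) (ltnW ij).
rewrite leq_eqVlt => /orP[/eqP/val_inj fe|//].
by have := inj i j isT isT fe => ie; move: ij; rewrite ie ltnn.
Qed.

Definition wt (R : realType) k n (f : fT k n) : R :=
  ((\prod_(i < n) (fib f i)`!)%N%:R)^-1.
Definition bet (R : realType) n (a : nat) (i : 'I_n) : R :=
  ((i.+1 == a)%:R - (i.+1 == a.+1)%:R).
Definition Ds (R : realType) k n (P : pred (fT k n)) (a : nat) (m : 'I_k) : R :=
  \sum_(f | P f) wt R f * bet R a (f m).

Lemma wt_ge0 (R : realType) k n (f : fT k n) : 0 <= wt R f.
Proof. by rewrite /wt invr_ge0 ler0n. Qed.

Lemma wt_le1 (R : realType) k n (f : fT k n) : wt R f <= 1.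
Proof.
have h : (0 < \prod_(i < n) (fib f i)`!)%N by apply: prodn_gt0 => i; apply: fact_gt0.
by rewrite /wt invf_le1 ?ltr0n // ler1n.
Qed.

Lemma wt_sw (R : realType) k n (x y : 'I_n) (f : fT k n) :
  x != y -> y \notin imf f -> wt R (sw x y f) = wt R f.
Proof.
move=> xy yn; rewrite /wt; congr (_%:R^-1).
rewrite [RHS](reindex_inj (@perm_inj _ (tperm x y))) /=.
apply: eq_bigr => i _; congr (_`!); rewrite /fib; apply: eq_card => p; rewrite !inE ffunE.
have fy : f p != y by apply/eqP => e; move: yn; rewrite -e imfP.
case: (tpermP x y i) => [->|->|ix iy].
- case: (eqVneq (f p) x) => [e|ne].
    rewrite (negbTE fy); apply/negbTE; apply/eqP => yx; move: xy; by rewrite yx eqxx.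
  by rewrite (negbTE ne) (negbTE fy).
- case: (eqVneq (f p) x) => [e|ne]; first by rewrite eqxx.
  by rewrite (negbTE fy).
- case: (eqVneq (f p) x) => [e|ne].
    rewrite e; case: eqP => [yi|_]; first by exfalso; apply: iy; rewrite yi.
    by case: eqP => // xi; exfalso; apply: ix; rewrite xi.
  by [].
Qed.

Lemma sum_ind (R : realType) k n (P : pred (fT k n)) (F : fT k n -> R) (b : fT k n -> bool) :
  \sum_(f | P f) F f * (b f)%:R = \sum_(f | P f && b f) F f.
Proof.
rewrite big_mkcondr /=; apply: eq_bigr => f _.
by case: (b f); rewrite ?mulr1 ?mulr0.
Qed.

Lemma Ds_split (R : realType) k n (P : pred (fT k n)) a m (x y : 'I_n) :
  (x : nat).+1 = a -> (y : nat) = a ->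
  Ds R P a m = \sum_(f | P f && (f m == x)) wt R f - \sum_(f | P f && (f m == y)) wt R f.
Proof.
move=> ex ey.
have h1 : forall f : fT k n, ((f m).+1 == a) = (f m == x) by move=> f; rewrite -ex eqSS.
have h2 : forall f : fT k n, ((f m).+1 == a.+1) = (f m == y) by move=> f; rewrite -ey eqSS.
rewrite /Ds /bet.
under eq_bigr => f _ do rewrite h1 h2 mulrBr.
by rewrite sumrB !sum_ind.
Qed.

Lemma sum_wt_bound (R : realType) k n (Q Q' : pred (fT k n)) :
  (forall f, Q f -> Q' f) ->
  0 <= \sum_(f | Q f) wt R f <= #|[set f | Q' f]|%:R.
Proof.
move=> QQ; apply/andP; split; first by apply: sumr_ge0 => f _; apply: wt_ge0.
apply: (@le_trans _ _ (\sum_(f | Q f) (1 : R))).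
  by apply: ler_sum => f _; apply: wt_le1.
have -> : \sum_(f | Q f) (1 : R) = #|[set f | Q f]|%:R.
  rewrite -sum1_card natr_sum; apply: eq_big => [f|f _]; by rewrite ?inE.
rewrite ler_nat; apply: subset_leq_card; apply/fintype.subsetP => f.
by rewrite !inE; apply: QQ.
Qed.

Lemma Ds_XY (R : realType) k n (P : pred (fT k n)) a m (x y : 'I_n) :
  (x : nat).+1 = a -> (y : nat) = a ->
  (forall f, P f -> y \notin imf f -> P (sw x y f)) ->
  (forall f, P f -> x \notin imf f -> P (sw y x f)) ->
  Ds R P a m = \sum_(f | [&& P f, f m == x & y \in imf f]) wt R f
   - \sum_(f | [&& P f, f m == y & x \in imf f]) wt R f.
Proof.
move=> ex ey c1 c2; have xy : x != y.
  by apply/eqP => e; move: ex; rewrite e ey; lia.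
rewrite (@Ds_split R k n P a m x y ex ey); apply: swap_sum => //.
by move=> f; apply: wt_sw.
Qed.

Definition NC k n (x y : 'I_n) (r : nat) : nat :=
  #|[set f : fT k n | [&& x \in imf f, y \in imf f & (#|imf f| <= r)%N]]|.

Lemma Ds_bound (R : realType) k n (P : pred (fT k n)) a m (x y : 'I_n) :
  (x : nat).+1 = a -> (y : nat) = a ->
  (forall f, P f -> y \notin imf f -> P (sw x y f)) ->
  (forall f, P f -> x \notin imf f -> P (sw y x f)) ->
  `|Ds R P a m| <= (NC k x y k)%:R.
Proof.
move=> ex ey c1 c2; rewrite (@Ds_XY R k n P a m x y ex ey c1 c2).
have /andP[X0 XN] := @sum_wt_bound R k n (fun f => [&& P f, f m == x & y \in imf f])
  (fun f => [&& x \in imf f, y \in imf f & #|imf f| <= k]%N)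
  (fun f => ltac:(case/and3P => _ /eqP <- ->; by rewrite imfP imf_card)).
have /andP[Y0 YN] := @sum_wt_bound R k n (fun f => [&& P f, f m == y & x \in imf f])
  (fun f => [&& x \in imf f, y \in imf f & #|imf f| <= k]%N)
  (fun f => ltac:(case/and3P => _ /eqP <- ->; by rewrite imfP imf_card)).
rewrite /NC; move: X0 XN Y0 YN.
set X := \sum_(f | _) _; set Y := \sum_(f | _) _; set N := (_ %:R).
by move=> *; rewrite ler_norml; apply/andP; split; lra.
Qed.

Lemma Ds_diff_bound (R : realType) k n a m (x y : 'I_n) :
  (x : nat).+1 = a -> (y : nat) = a ->
  `|Ds R (@nondecr k n) a m - Ds R (@strincr k n) a m| <= (NC k x y k.-1)%:R.
Proof.
move=> ex ey; have eyx : (y : nat) = x.+1 by rewrite ey ex.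
rewrite (@Ds_XY R k n _ a m x y ex ey (fun f => nd_sw1 eyx) (fun f => nd_sw2 eyx)).
rewrite (@Ds_XY R k n _ a m x y ex ey (fun f => st_sw1 eyx) (fun f => st_sw2 eyx)).
have gen : forall (z : 'I_n) (q : 'I_n),
  \sum_(f | [&& nondecr f, f m == z & q \in imf f]) wt R f
  - \sum_(f | [&& strincr f, f m == z & q \in imf f]) wt R f
  = \sum_(f | [&& nondecr f, f m == z & q \in imf f] && ~~ strincr f) wt R f.
  move=> z q.
  rewrite (bigID (@strincr k n) (fun f => [&& nondecr f, f m == z & q \in imf f])) /=.
  have -> : \sum_(f | [&& nondecr f, f m == z & q \in imf f] && strincr f) wt R f =
            \sum_(f | [&& strincr f, f m == z & q \in imf f]) wt R f.
    apply: eq_bigl => f; case st: (strincr f); last by rewrite andbF.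
    by rewrite andbT (st_nd st).
  by rewrite addrAC subrr add0r.
have -> : forall a b c d : R, (a - b) - (c - d) = (a - c) - (b - d) by move=> *; ring.
rewrite !gen.
have /andP[A0 AN] := @sum_wt_bound R k n
  (fun f => [&& nondecr f, f m == x & y \in imf f] && ~~ strincr f)
  (fun f => [&& x \in imf f, y \in imf f & (#|imf f| <= k.-1)%N])
  (fun f => ltac:(case/andP => /and3P[nd /eqP fm yi] nst;
                  by rewrite -fm imfP yi (nd_nst_card nd nst))).
have /andP[B0 BN] := @sum_wt_bound R k n
  (fun f => [&& nondecr f, f m == y & x \in imf f] && ~~ strincr f)
  (fun f => [&& x \in imf f, y \in imf f & (#|imf f| <= k.-1)%N])
  (fun f => ltac:(case/andP => /and3P[nd /eqP fm xi] nst;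
                  by rewrite -fm imfP xi (nd_nst_card nd nst))).
rewrite /NC; move: A0 AN B0 BN.
set X := \sum_(f | _) _; set Y := \sum_(f | _) _; set N := (_ %:R).
by move=> *; rewrite ler_norml; apply/andP; split; lra.
Qed.

Local Open Scope ring_scope.

Lemma isd_sum (R : realType) (I : Type) (r : seq I) (P : pred I) (F : I -> R -> R) (dF : I -> R) :
  (forall i, is_derive (0:R) (1:R) (F i) (dF i)) ->
  is_derive (0:R) (1:R) (fun t => \sum_(i <- r | P i) F i t) (\sum_(i <- r | P i) dF i).
Proof.
move=> h; elim: r => [|i r IH].
  under eq_fun do rewrite big_nil.
  rewrite big_nil; exact: is_derive_cst.
under eq_fun do rewrite big_cons.
rewrite big_cons; case: (P i) => //.
exact: is_deriveD.
Qed.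

Lemma isd_scal (R : realType) (c : R) (F : R -> R) (dF : R) :
  is_derive (0:R) (1:R) F dF -> is_derive (0:R) (1:R) (fun t => c * F t) (c * dF).
Proof. move=> h; exact: is_deriveZ. Qed.

Lemma isd_prod (R : realType) k (c : R) (v : 'I_k -> R) :
  is_derive (0:R) (1:R) (fun t => \prod_(m < k) (c + t * v m)) ((\sum_(m < k) v m) * c ^+ k.-1).
Proof.
elim: k v => [|k IH] v.
  under eq_fun do rewrite big_ord0.
  rewrite big_ord0 mul0r; exact: is_derive_cst.
under eq_fun do rewrite big_ord_recr.
have h1 : is_derive (0:R) (1:R) (fun t : R => t * v ord_max) (v ord_max).
  have := @is_deriveM R R (fun t => t) (cst (v ord_max)) 0 1 1 0.
  move=> /(_ (is_derive_id _ _) (is_derive_cst _ _ _)).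
  rewrite scaler0 add0r /=.
  have -> : (v ord_max)%:A = v ord_max by rewrite /GRing.scale /= mulr1.
  by [].
have h2 : is_derive (0:R) (1:R) (fun t => c + t * v ord_max) (v ord_max).
  have := is_deriveD (is_derive_cst c (0:R) (1:R)) h1.
  by rewrite add0r.
have := is_deriveM (IH (fun i => v (widen_ord (leqnSn k) i))) h2.
rewrite /= big_ord_recr /=.
have -> : \prod_(i < k) (c + 0 * v (widen_ord (leqnSn k) i)) = c ^+ k.
  by rewrite (eq_bigr (fun _ => c)) ?prodr_const ?card_ord // => i _; rewrite mul0r addr0.
rewrite mul0r addr0 => H.
suff -> : (\sum_(i < k) v (widen_ord (leqnSn k) i) + v ord_max) * c ^+ k =
   c ^+ k *: v ord_max + c *: ((\sum_(i < k) v (widen_ord (leqnSn k) i)) * c ^+ k.-1).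
  exact: H.
case: k {IH H h1 h2} v => [|k] v.
  by rewrite big_ord0 !mul0r scaler0 addr0 add0r /= mulrC.
rewrite /= mulrDl addrC; congr (_ + _); first by rewrite mulrC.
by rewrite /GRing.scale /= mulrCA exprS.
Qed.

Lemma sum_pick (V : zmodType) lo hi a (F : nat -> V) : (lo <= a < hi)%N ->
  \sum_(lo <= i < hi) (if i == a then F i else 0) = F a.
Proof.
case/andP => la ah.
rewrite (big_cat_nat la (ltnW ah)) /= [\sum_(a <= i < hi) _]big_ltn // eqxx.
rewrite big_nat_cond big1 ?add0r; last first.
  by move=> i /andP[/andP[_ ia] _]; rewrite (ltn_eqF ia).
rewrite big_nat_cond big1 ?addr0 //.
by move=> i /andP[/andP[ai _] _]; rewrite (gtn_eqF ai).
Qed.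

Lemma Jx_eq (R : realType) n a b (t : R) : (1 <= a < n)%N -> (1 <= b < n)%N ->
  Jx n (ecoord a b t) = Jmx R n + t *: Bmx R n a b.
Proof.
move=> ha hb; rewrite /Jx; congr (_ + _).
rewrite -(@sum_pick _ 1 n a (fun _ => t *: Bmx R n a b)) //.
apply: eq_bigr => i' _.
case: eqP => [->|ne].
  rewrite -(@sum_pick _ 1 n b (fun _ => t *: Bmx R n a b)) //.
  apply: eq_bigr => j' _; rewrite /ecoord eqxx /=.
  by case: eqP => [->|_]; rewrite ?scale0r.
apply: big1 => j' _; rewrite /ecoord.
by case: eqP => // _; rewrite scale0r.
Qed.

Lemma Jx_entry (R : realType) n a b (t : R) i j : (1 <= a < n)%N -> (1 <= b < n)%N ->
  Jx n (ecoord a b t) i j = (n%:R)^-1 + t * Bmx R n a b i j.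
Proof. by move=> ha hb; rewrite Jx_eq // /Jmx !mxE. Qed.

Lemma Bmx_fact (R : realType) n a b (i j : 'I_n) :
  Bmx R n a b i j = bet R a i * bet R b j.
Proof.
rewrite /Bmx /bet mxE.
case: (eqVneq (i : nat).+1 a) => ea; case: (eqVneq (i : nat).+1 a.+1) => eb;
case: (eqVneq (j : nat).+1 b) => ec; case: (eqVneq (j : nat).+1 b.+1) => ed => /=;
  first [lia | ring | (rewrite /=; ring) | (rewrite /= ?mulr1 ?mulr0 ?oppr0 //)].
Qed.

Lemma wt_st (R : realType) k n (f : fT k n) : strincr f -> wt R f = 1.
Proof.
move=> /forallP st; rewrite /wt big1 ?mulr1n ?invr1 // => i _.
have : (fib f i <= 1)%N.
  apply/card_le1_eqP => p q; rewrite !inE => /eqP fp /eqP fq.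
  case: (ltngtP p q) => h.
  - by have := implyP (forallP (st p) q) h; rewrite fp fq ltnn.
  - by have := implyP (forallP (st q) p) h; rewrite fp fq ltnn.
  - exact: val_inj.
by case: (fib f i) => [|[|]].
Qed.

Definition Wfg (R : realType) k n (f g : fT k n) : R :=
  ((\prod_(i < n) ((fib f i)`! * (fib g i)`!))%N%:R)^-1.

Lemma Wfg_wt (R : realType) k n (f g : fT k n) : Wfg R f g = wt R f * wt R g.
Proof. by rewrite /Wfg /wt big_split natrM invfM. Qed.

Lemma dh_val (R : realType) k (pi : 'S_k) n a b : (1 <= a < n)%N -> (1 <= b < n)%N ->
  dh R pi n a b = (k`!)%:R / (n%:R)^+k *
    \sum_(f : fT k n | nondecr f) \sum_(g : fT k n | nondecr g)
      (Wfg R f g * ((\sum_(m < k) Bmx R n a b (f m) (g (pi m))) * ((n%:R)^-1)^+k.-1)).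
Proof.
move=> ha hb; rewrite /dh derive1E.
have E : (fun t => h pi n (ecoord a b t)) = (fun t : R => (k`!)%:R / (n%:R)^+k *
    \sum_(f : fT k n | nondecr f) \sum_(g : fT k n | nondecr g)
      (Wfg R f g * \prod_(m < k) ((n%:R)^-1 + t * Bmx R n a b (f m) (g (pi m))))).
  apply/funext => t; rewrite /h; congr (_ * _); apply: eq_bigr => f _.
  apply: eq_bigr => g _; congr (_ * _); apply: eq_bigr => m _; exact: Jx_entry.
rewrite E; apply: derive_val.
apply: isd_scal; apply: isd_sum => f; apply: isd_sum => g; apply: isd_scal.
exact: isd_prod.
Qed.

Lemma S_fact (R : realType) k (pi : 'S_k) n a b (P : pred (fT k n)) :
  \sum_(f | P f) \sum_(g | P g) (Wfg R f g * \sum_(m < k) Bmx R n a b (f m) (g (pi m)))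
   = \sum_(m < k) Ds R P a m * Ds R P b (pi m).
Proof.
under eq_bigr => f _ do under eq_bigr => g _ do rewrite Wfg_wt mulr_sumr.
under eq_bigr => f _ do rewrite exchange_big.
rewrite exchange_big; apply: eq_bigr => m _.
rewrite /Ds big_distrlr; apply: eq_bigr => f _; apply: eq_bigr => g _.
by rewrite Bmx_fact mulrACA.
Qed.

Lemma rhs_fact (R : realType) k (pi : 'S_k) n a b :
  \sum_(f : fT k n | strincr f) \sum_(g : fT k n | strincr g) \sum_(m < k) Bmx R n a b (f m) (g (pi m))
   = \sum_(m < k) Ds R (@strincr k n) a m * Ds R (@strincr k n) b (pi m).
Proof.
rewrite -S_fact; apply: eq_bigr => f sf; apply: eq_bigr => g sg.
by rewrite Wfg_wt (wt_st R sf) (wt_st R sg) !mul1r.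
Qed.

Definition Ak (R : realType) k : R := (k.+1 ^ k * k.+1)%N%:R.

Lemma Dbnd (R : realType) k n a m : (0 < n)%N -> (1 <= a < n)%N ->
  [/\ (n%:R)^+2 * `|Ds R (@nondecr k.+1 n) a m| <= Ak R k.+1 * (n%:R)^+k.+1,
      (n%:R)^+2 * `|Ds R (@strincr k.+1 n) a m| <= Ak R k.+1 * (n%:R)^+k.+1 &
      (n%:R)^+3 * `|Ds R (@nondecr k.+1 n) a m - Ds R (@strincr k.+1 n) a m|
         <= Ak R k.+1 * (n%:R)^+k.+1 ].
Proof.
move=> n0 /andP[a1 an].
have hx : (a.-1 < n)%N by lia.
set x := Ordinal hx; set y := Ordinal an.
have ex : (x : nat).+1 = a by rewrite /= prednK.
have ey : (y : nat) = a by [].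
have eyx : (y : nat) = x.+1 by rewrite ey ex.
have xy : x != y by apply/eqP => e; move: ex; rewrite e ey; lia.
have c := @cnt_main k.+1 n x y k.+1 n0 xy.
have c' := @cnt_main k.+1 n x y k n0 xy.
have B1 : (n%:R)^+2 * (NC k.+1 x y k.+1)%:R <= Ak R k.+1 * (n%:R)^+k.+1 :> R.
  by rewrite /Ak -!natrX -!natrM ler_nat mulnC; exact: c.
split.
- apply: le_trans B1; rewrite ler_pM2l ?exprn_gt0 ?ltr0n //.
  exact: (@Ds_bound R k.+1 n _ a m x y ex ey (fun f => nd_sw1 eyx) (fun f => nd_sw2 eyx)).
- apply: le_trans B1; rewrite ler_pM2l ?exprn_gt0 ?ltr0n //.
  exact: (@Ds_bound R k.+1 n _ a m x y ex ey (fun f => st_sw1 eyx) (fun f => st_sw2 eyx)).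
- apply: (@le_trans _ _ ((n%:R)^+3 * (NC k.+1 x y k)%:R)).
    rewrite ler_pM2l ?exprn_gt0 ?ltr0n //.
    exact: (@Ds_diff_bound R k.+1 n a m x y ex ey).
  rewrite /Ak -!natrX -!natrM ler_nat.
  have -> : (n ^ 3 * NC k.+1 x y k = n * (NC k.+1 x y k * n ^ 2))%N.
    by rewrite [RHS]mulnCA -expnS mulnC.
  apply: (@leq_trans (n * (k.+2 ^ k.+1 * k.+1 * n ^ k))%N); first by rewrite leq_mul2l c' orbT.
  rewrite [(n ^ k.+1)%N]expnS; move: (k.+2 ^ k.+1)%N (n ^ k)%N => P N.
  have e1 : (n * (P * k.+1 * N) = k.+1 * (P * N * n))%N by ring.
  have e2 : (P * k.+2 * (n * N) = k.+2 * (P * N * n))%N by ring.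
  by rewrite e1 e2 leq_mul2r leqnSn orbT.
Qed.

Lemma prod_diff (R : realType) (u X D D' E E' : R) : 0 < u ->
  u^+3 * `|D - D'| <= X -> u^+2 * `|E| <= X -> u^+2 * `|D'| <= X -> u^+3 * `|E - E'| <= X ->
  `|D * E - D' * E'| <= 2 * X ^+ 2 / u ^+ 5.
Proof.
move=> u0 h1 h2 h3 h4.
have X0 : 0 <= X by apply: (le_trans _ h2); rewrite mulr_ge0 // exprn_ge0 // ltW.
have -> : D * E - D' * E' = (D - D') * E + D' * (E - E') by ring.
rewrite ler_pdivlMr ?exprn_gt0 //.
have e5 : u ^+ 5 = u ^+ 3 * u ^+ 2 by rewrite -exprD.
apply: (@le_trans _ _ ((`|D - D'| * `|E| + `|D'| * `|E - E'|) * u ^+ 5)).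
  by rewrite ler_pM2r ?exprn_gt0 // (le_trans (ler_normD _ _)) // !normrM.
rewrite mulrDl; have -> : 2 * X ^+ 2 = X * X + X * X by rewrite expr2; ring.
apply: lerD.
  have -> : `|D - D'| * `|E| * u ^+ 5 = (u ^+ 3 * `|D - D'|) * (u ^+ 2 * `|E|).
    by rewrite e5; ring.
  by apply: ler_pM => //; rewrite mulr_ge0 // exprn_ge0 // ltW.
have -> : `|D'| * `|E - E'| * u ^+ 5 = (u ^+ 2 * `|D'|) * (u ^+ 3 * `|E - E'|).
  by rewrite e5; ring.
by apply: ler_pM => //; rewrite mulr_ge0 // exprn_ge0 // ltW.
Qed.

Lemma diff_bound (R : realType) k (pi : 'S_k) (alpha beta : R) n :
  (0 < n)%N -> (1 <= fl alpha n < n)%N -> (1 <= fl beta n < n)%N ->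
  `|lhs_seq pi alpha beta n - rhs_seq pi alpha beta n|
     <= (2 * k * k`!)%N%:R * (Ak R k)^+2 / n%:R.
Proof.
move=> n0 ha hb.
rewrite /lhs_seq /rhs_seq dh_val // rhs_fact.
set a := fl alpha n; set b := fl beta n.
have E1 : \sum_(f : fT k n | nondecr f) \sum_(g : fT k n | nondecr g)
      (Wfg R f g * ((\sum_(m < k) Bmx R n a b (f m) (g (pi m))) * ((n%:R)^-1)^+k.-1))
   = (\sum_(m < k) Ds R (@nondecr k n) a m * Ds R (@nondecr k n) b (pi m)) * ((n%:R)^-1)^+k.-1.
  rewrite -S_fact mulr_suml; apply: eq_bigr => f _; rewrite mulr_suml.
  by apply: eq_bigr => g _; rewrite mulrA.
rewrite E1.
case: k pi E1 => [|k] pi _.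
  rewrite !big_ord0 mul0r !mulr0 subrr normr0; apply: mulr_ge0.
    by apply: mulr_ge0; [exact: ler0n | exact: sqr_ge0].
  by rewrite invr_ge0 ler0n.
set u : R := n%:R.
have u0 : 0 < u by rewrite ltr0n.
have uN : u != 0 by rewrite gt_eqF.
have ukN : u ^+ k != 0 by rewrite expf_neq0.
set ST := \sum_(m < k.+1) _; set ST' := \sum_(m < k.+1) _.
have eR : u ^ (2 * (k.+1 : int) - 4) = u ^+ (2 * k.+1) / u ^+ 4 by rewrite expfzDr.
rewrite eR.
set Q : R := (k.+1)`!%:R * u ^+ 4 / u ^+ (2 * k.+1).
have e2k : u ^+ (2 * k.+1) = u ^+ k * u ^+ k * u * u.
  by rewrite (_ : (2 * k.+1 = k + k + 1 + 1)%N) ?exprD ?expr1 //; lia.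
have eL : u ^+ 3 * ((k.+1)`!%:R / u ^+ k.+1 * (ST * (u^-1) ^+ k.+1.-1)) = Q * ST.
  rewrite /Q e2k /= exprVn [u ^+ k.+1]exprS; move: ukN; set w := u ^+ k => wN.
  by field; rewrite wN uN.
have eRR : (k.+1)`!%:R / (u ^+ (2 * k.+1) / u ^+ 4) * ST' = Q * ST'.
  rewrite /Q e2k; field; by rewrite ukN uN.
rewrite eL eRR -mulrBr normrM.
have Q0 : 0 <= Q by rewrite /Q mulr_ge0 ?invr_ge0 ?exprn_ge0 ?mulr_ge0 ?ler0n ?ltW.
rewrite (ger0_norm Q0) /ST /ST' -sumrB.
set X := Ak R k.+1 * u ^+ k.+1.
apply: (@le_trans _ _ (Q * \sum_(m < k.+1) (2 * X ^+ 2 / u ^+ 5))).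
  apply: ler_wpM2l => //; apply: (le_trans (ler_norm_sum _ _ _)).
  apply: ler_sum => m _.
  have [b1 b2 b3] := @Dbnd R k n a m n0 ha.
  have [c1 c2 c3] := @Dbnd R k n b (pi m) n0 hb.
  exact: prod_diff u0 b3 c1 b2 c3.
rewrite sumr_const card_ord /Q /X e2k exprMn [u ^+ k.+1]exprS -mulr_natr !natrM.
move: ukN; set w := u ^+ k => wN.
rewrite le_eqVlt; apply/orP; left; apply/eqP.
by field; rewrite wN uN.
Qed.
Local Open Scope classical_set_scope.

Lemma fl_ok (R : realType) (alpha : R) n : 0 < alpha < 1 ->
  ((Num.truncn alpha^-1).+1 <= n)%N -> (1 <= fl alpha n < n)%N.
Proof.
move=> /andP[a0 a1] hn.
have n0 : (0 < n)%N by apply: leq_trans hn.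
have u0 : 0 < n%:R :> R by rewrite ltr0n.
have hu : alpha^-1 < n%:R.
  have ai : 0 < alpha^-1 by rewrite invr_gt0.
  have /andP[_ h] := truncn_itv (ltW ai).
  apply: (lt_le_trans h); by rewrite ler_nat.
apply/andP; split.
  rewrite /fl truncn_gt0.
  have : alpha * alpha^-1 < alpha * n%:R by rewrite ltr_pM2l.
  by rewrite mulfV ?gt_eqF // => h; exact: ltW.
rewrite /fl truncn_lt_nat ?mulr_ge0 ?ler0n ?ltW //.
rewrite -subr_gt0 -{1}(mul1r (n%:R)) -mulrBl; apply: mulr_gt0 => //; lra.
Qed.

Lemma key_cvg (R : realType) k (pi : 'S_k) (alpha beta : R) :
  0 < alpha < 1 -> 0 < beta < 1 ->
  (lhs_seq pi alpha beta n - rhs_seq pi alpha beta n) @[n --> \oo] --> (0:R).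
Proof.
move=> ha hb.
set M : R := (2 * k * k`!)%N%:R * (Ak R k)^+2.
have M0 : 0 <= M by apply: mulr_ge0; [exact: ler0n | exact: sqr_ge0].
set N0 := maxn (Num.truncn alpha^-1).+1 (Num.truncn beta^-1).+1.
apply/cvgrPdist_le => e e0.
exists (maxn N0 (Num.truncn (M / e)).+1) => // n /= Hn.
move: Hn; rewrite !geq_max => /andP[/andP[h1 h2] h3].
have n0 : (0 < n)%N by apply: leq_trans h1.
rewrite sub0r normrN.
apply: (le_trans (diff_bound pi n0 (fl_ok ha h1) (fl_ok hb h2))).
rewrite -/M ler_pdivrMr ?ltr0n //.
have Me0 : 0 <= M / e by rewrite divr_ge0 // ltW.
have /andP[_ h] := truncn_itv Me0.
have : M / e < n%:R by apply: (lt_le_trans h); rewrite ler_nat.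
rewrite ltr_pdivrMr // => h'; rewrite mulrC; exact: ltW.
Qed.

Unset Implicit Arguments.

Theorem lemma4 (R : realType) (k : nat) (pi : 'S_k) (alpha beta : R) :
  0 < alpha < 1 -> 0 < beta < 1 ->
  ((exists l : R, lhs_seq pi alpha beta n @[n --> \oo] --> l) \/
   (exists l : R, rhs_seq pi alpha beta n @[n --> \oo] --> l)) ->
  exists l : R, lhs_seq pi alpha beta n @[n --> \oo] --> l /\
                rhs_seq pi alpha beta n @[n --> \oo] --> l.
Proof.
move=> ha hb H.
have key := key_cvg pi ha hb.
case: H => -[l Hl]; exists l; split => //.
  have -> : rhs_seq pi alpha beta =
      (fun n => lhs_seq pi alpha beta n - (lhs_seq pi alpha beta n - rhs_seq pi alpha beta n)).
    by apply/funext => n; rewrite subKr.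
  have := cvgB Hl key; rewrite subr0 => h; exact: h.
have -> : lhs_seq pi alpha beta =
    (fun n => rhs_seq pi alpha beta n + (lhs_seq pi alpha beta n - rhs_seq pi alpha beta n)).
  by apply/funext => n; rewrite addrC subrK.
have := cvgD Hl key; rewrite addr0 => h; exact: h.
Qed.
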